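(* Let $K_1, K_2, K_3 > 0$ and, for $h > 0$ and $j = 1,2,3$, let $\Omega_j(h) = \sqrt{K_j \tanh(K_j h)}$. There exists a positive and finite value of $h$ such that $\Omega_1(h) + \Omega_2(h) = \Omega_3(h)$ if and only if $$K_1 + K_2 < K_3 < \big(\sqrt{K_1} + \sqrt{K_2}\big)^2.$$ When this pair of inequalities is satisfied, the corresponding value of $h$ is unique.
   Context: Physically, $K_j$ are positive eigenvalue square roots (''wavenumbers'') of the negative horizontal Laplacian with Neumann boundary conditions on the cross-section of a cylinder, $h$ is the dimensionless fluid depth, and $\Omega_j(h)$ is the angular frequency given by the finite-depth gravity-wave dispersion relation $\Omega_j^2 = K_j\tanh(K_j h)$. The theorem is a purely real-analytic statement about these functions. *)

(* Defs.v *)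
From Stdlib Require Import Reals.
Open Scope R_scope.

Definition Omega (K h : R) : R := sqrt (K * tanh (K * h)).

(* Main.v *)
Require Import Defs.
From Stdlib Require Import Reals Lra Psatz Ranalysis5.
From Coquelicot Require Import Coquelicot.
Open Scope R_scope.

Lemma incr_MVT (f f' : R -> R) (a b : R) : a < b ->
  (forall c, a <= c <= b -> is_derive f c (f' c)) ->
  (forall c, a < c < b -> 0 < f' c) -> f a < f b.
Proof.
intros hab hd hp.
destruct (MVT_cor2 f f' a b hab) as [c [e hc]].
- intros c hc. apply is_derive_Reals. now apply hd.
- assert (0 < f' c * (b - a)) by (apply Rmult_lt_0_compat; [apply hp; lra| lra]). lra.
Qed.

Lemma exp_neg x : exp (- x) = / exp x.
Proof. apply exp_Ropp. Qed.

Lemma cosh_pos x : 0 < cosh x.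
Proof. unfold cosh. pose proof (exp_pos x); pose proof (exp_pos (-x)). lra. Qed.

Lemma sinh_pos x : 0 < x -> 0 < sinh x.
Proof. intros hx. unfold sinh. assert (exp (-x) < exp x) by (apply exp_increasing; lra). lra. Qed.

Lemma sinh0 : sinh 0 = 0.
Proof. unfold sinh. rewrite Ropp_0. lra. Qed.

Lemma ch2 x : cosh x ^ 2 - sinh x ^ 2 = 1.
Proof. unfold cosh, sinh. rewrite exp_neg. pose proof (exp_pos x). field. lra. Qed.

Lemma sh2 x : sinh (2 * x) = 2 * sinh x * cosh x.
Proof. unfold cosh, sinh. rewrite !exp_neg.
replace (2 * x) with (x + x) by ring. rewrite exp_plus. pose proof (exp_pos x). field. lra. Qed.

Lemma cosh_gt1 x : 0 < x -> 1 < cosh x.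
Proof. intros hx. pose proof (ch2 x). pose proof (sinh_pos x hx). pose proof (cosh_pos x). nra. Qed.

Lemma is_derive_sinh x : is_derive sinh x (cosh x).
Proof. unfold sinh, cosh. auto_derive; auto. rewrite !exp_neg. pose proof (exp_pos x). field. lra. Qed.
Lemma is_derive_cosh x : is_derive cosh x (sinh x).
Proof. unfold sinh, cosh. auto_derive; auto. rewrite !exp_neg. pose proof (exp_pos x). field. lra. Qed.

Lemma M1 u : 0 < u -> u < sinh u.
Proof. intros hu.
assert (H := incr_MVT (fun t => sinh t - t) (fun t => cosh t - 1) 0 u hu).
simpl in H. rewrite sinh0 in H.
assert (0 - 0 < sinh u - u); [|lra]. apply H.
- intros c _. auto_derive; auto. ring.
- intros c hc. pose proof (cosh_gt1 c ltac:(lra)). lra.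
Qed.

Lemma M3a t : 0 < t -> sinh t < t * cosh t.
Proof. intros ht.
assert (H := incr_MVT (fun t => t * cosh t - sinh t) (fun t => t * sinh t) 0 t ht).
simpl in H. rewrite sinh0 in H.
assert (0 * cosh 0 - 0 < t * cosh t - sinh t); [|lra]. apply H.
- intros c _. auto_derive; auto. ring.
- intros c hc. pose proof (sinh_pos c ltac:(lra)). nra.
Qed.

Lemma tanh_lt x : 0 < x -> tanh x < x.
Proof. intros hx. unfold tanh. pose proof (cosh_pos x). pose proof (M3a x hx).
apply Rmult_lt_reg_r with (cosh x); auto. field_simplify; lra. Qed.

Lemma tanh_pos x : 0 < x -> 0 < tanh x.
Proof. intros hx. unfold tanh. pose proof (cosh_pos x). pose proof (sinh_pos x hx).
apply Rdiv_lt_0_compat; auto. Qed.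

Lemma M2 x y : 0 < x -> x < y -> x * tanh y < y * tanh x.
Proof. intros hx hxy.
assert (H := incr_MVT (fun t => t * cosh t / sinh t)
   (fun t => (sinh t * cosh t - t) / (sinh t)^2) x y hxy).
simpl in H.
assert (Hl : x * cosh x / sinh x < y * cosh y / sinh y).
{ apply H.
  - intros c hc. pose proof (sinh_pos c ltac:(lra)). auto_derive.
    + lra.
    + match goal with |- ?L = ?R => assert (E : L - R = (c / sinh c ^ 2) * (1 - (cosh c ^ 2 - sinh c ^ 2))) by (field; lra) end.
      rewrite ch2 in E. lra.
  - intros c hc. pose proof (sinh_pos c ltac:(lra)).
    assert (sinh (2*c) = 2 * sinh c * cosh c) by apply sh2.
    pose proof (M1 (2*c) ltac:(lra)).
    apply Rdiv_lt_0_compat; nra. }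
unfold tanh. pose proof (sinh_pos x hx). pose proof (sinh_pos y ltac:(lra)).
pose proof (cosh_pos x). pose proof (cosh_pos y).
apply Rmult_lt_reg_r with (cosh x * cosh y / (sinh x * sinh y)).
{ apply Rdiv_lt_0_compat; nra. }
replace (x * (sinh y / cosh y) * (cosh x * cosh y / (sinh x * sinh y))) with (x * cosh x / sinh x) by (field; lra).
replace (y * (sinh x / cosh x) * (cosh x * cosh y / (sinh x * sinh y))) with (y * cosh y / sinh y) by (field; lra).
auto.
Qed.

Lemma M3b s t : 0 < s -> s < t -> t * sinh s < s * sinh t.
Proof. intros hs hst.
assert (H := incr_MVT (fun t => sinh t / t) (fun t => (t * cosh t - sinh t) / t^2) s t hst).
simpl in H.
assert (Hl : sinh s / s < sinh t / t).
{ apply H.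
  - intros c hc. auto_derive. lra. field. lra.
  - intros c hc. pose proof (M3a c ltac:(lra)). apply Rdiv_lt_0_compat; nra. }
apply Rmult_lt_reg_r with (/ (s * t)). { apply Rinv_0_lt_compat; nra. }
replace (t * sinh s * / (s * t)) with (sinh s / s) by (field; lra).
replace (s * sinh t * / (s * t)) with (sinh t / t) by (field; lra). auto.
Qed.

Lemma M4 a b h h' : 0 < a -> a < b -> 0 < h -> h < h' ->
  tanh (a*h) * tanh (b*h') < tanh (a*h') * tanh (b*h).
Proof. intros ha hab hh hhh.
assert (H := incr_MVT (fun h => sinh (a*h) * cosh (b*h) / (cosh (a*h) * sinh (b*h)))
  (fun h => (a * sinh (b*h) * cosh (b*h) - b * sinh (a*h) * cosh (a*h)) / (cosh (a*h) * sinh (b*h))^2) h h' hhh).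
simpl in H.
assert (Hl : sinh (a*h) * cosh (b*h) / (cosh (a*h) * sinh (b*h)) <
             sinh (a*h') * cosh (b*h') / (cosh (a*h') * sinh (b*h'))).
{ apply H.
  - intros c hc. pose proof (sinh_pos (b*c) ltac:(nra)). pose proof (cosh_pos (a*c)).
    pose proof (ch2 (a*c)). pose proof (ch2 (b*c)).
    auto_derive.
    + apply Rmult_integral_contrapositive; split; lra.
    + match goal with |- ?L = ?R => assert (E : L - R =
         (a * cosh (b*c) * sinh (b*c) / (cosh (a * c) * sinh (b * c))^2) * ((cosh (a*c) ^2 - sinh (a*c) ^2) - 1)
       - (b * sinh (a*c) * cosh (a*c) / (cosh (a * c) * sinh (b * c))^2) * ((cosh (b*c) ^2 - sinh (b*c) ^2) - 1))
       by (field; lra) end.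
      rewrite H2, H3 in E. lra.
  - intros c hc. pose proof (sinh_pos (b*c) ltac:(nra)). pose proof (cosh_pos (a*c)).
    pose proof (M3b (2*(a*c)) (2*(b*c)) ltac:(nra) ltac:(nra)).
    rewrite !sh2 in H2.
    assert (0 < cosh (a*c) * sinh (b*c)) by (apply Rmult_lt_0_compat; auto).
    apply Rdiv_lt_0_compat; [|rewrite Rmult_1_r; apply Rmult_lt_0_compat; auto].
    assert (0 < 4 * c) by lra.
    apply Rmult_lt_reg_l with (4*c); auto. lra. }
pose proof (tanh_pos (b*h) ltac:(nra)). pose proof (tanh_pos (b*h') ltac:(nra)).
pose proof (cosh_pos (a*h)). pose proof (cosh_pos (a*h')).
pose proof (sinh_pos (b*h) ltac:(nra)). pose proof (sinh_pos (b*h') ltac:(nra)).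
pose proof (cosh_pos (b*h)). pose proof (cosh_pos (b*h')).
replace (sinh (a*h) * cosh (b*h) / (cosh (a*h) * sinh (b*h))) with (tanh (a*h) / tanh (b*h)) in Hl
  by (unfold tanh; field; repeat split; lra).
replace (sinh (a*h') * cosh (b*h') / (cosh (a*h') * sinh (b*h'))) with (tanh (a*h') / tanh (b*h')) in Hl
  by (unfold tanh; field; repeat split; lra).
apply Rmult_lt_reg_r with (/ (tanh (b*h) * tanh (b*h'))). { apply Rinv_0_lt_compat; nra. }
replace (tanh (a*h) * tanh (b*h') * / (tanh (b*h) * tanh (b*h'))) with (tanh (a*h) / tanh (b*h)) by (field; lra).
replace (tanh (a*h') * tanh (b*h) * / (tanh (b*h) * tanh (b*h'))) with (tanh (a*h') / tanh (b*h')) by (field; lra).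
exact Hl.
Qed.

Lemma tanh_exp x : tanh x = 1 - 2 / (exp (2*x) + 1).
Proof. unfold tanh, sinh, cosh. rewrite exp_neg. replace (2*x) with (x+x) by ring.
rewrite exp_plus. pose proof (exp_pos x). field. split; nra. Qed.

Lemma tanh_lt1 x : tanh x < 1.
Proof. rewrite tanh_exp. pose proof (exp_pos (2*x)).
assert (0 < 2 / (exp (2 * x) + 1)) by (apply Rdiv_lt_0_compat; lra). lra. Qed.

Lemma tanh_incr x y : x < y -> tanh x < tanh y.
Proof. intros hxy. rewrite !tanh_exp.
assert (exp (2*x) < exp (2*y)) by (apply exp_increasing; lra).
pose proof (exp_pos (2*x)).
assert (2 / (exp (2 * y) + 1) < 2 / (exp (2 * x) + 1)); [|lra].
apply Rmult_lt_reg_r with ((exp (2 * y) + 1)*(exp (2 * x) + 1)). nra.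
field_simplify; lra. Qed.

Lemma tanh0 : tanh 0 = 0.
Proof. rewrite tanh_exp. rewrite Rmult_0_r, exp_0. field. Qed.

Lemma tanh_le x y : x <= y -> tanh x <= tanh y.
Proof. intros [h|h]. left; now apply tanh_incr. subst; lra. Qed.

Lemma tanh_nonneg x : 0 <= x -> 0 <= tanh x.
Proof. intros h. rewrite <- tanh0. now apply tanh_le. Qed.

Lemma tanh_lower x : 0 < x -> 2 * x / (exp (2*x) + 1) <= tanh x.
Proof. intros hx. rewrite tanh_exp. pose proof (exp_ineq1 (2*x) ltac:(lra)).
apply Rmult_le_reg_r with (exp (2*x) + 1). lra. field_simplify; lra. Qed.

Lemma sq_lt u v : 0 <= u -> 0 <= v -> u^2 < v^2 -> u < v.
Proof. intros. nra. Qed.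

Lemma Omega_sq K h : 0 < K -> 0 <= h -> Omega K h ^ 2 = K * tanh (K*h).
Proof. intros. unfold Omega. rewrite pow2_sqrt; auto. pose proof (tanh_nonneg (K*h) ltac:(nra)). nra. Qed.

Lemma Omega_nonneg K h : 0 <= Omega K h.
Proof. apply sqrt_pos. Qed.

Lemma Omega_pos K h : 0 < K -> 0 < h -> 0 < Omega K h.
Proof. intros. unfold Omega. apply sqrt_lt_R0. pose proof (tanh_pos (K*h) ltac:(nra)). nra. Qed.

Lemma Omega_cont K a : 0 < K -> 0 < a -> continuity_pt (Omega K) a.
Proof. intros hK ha. apply derivable_continuous_pt. apply ex_derive_Reals_0.
unfold Omega. pose proof (tanh_pos (K*a) ltac:(nra)). unfold tanh in *. auto_derive.
pose proof (cosh_pos (K*a)). split; [lra|split; auto]. apply Rmult_lt_0_compat; auto.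
Qed.

Lemma Kle_lt K1 K2 K3 h : 0 < K1 -> 0 < K2 -> 0 < K3 -> 0 < h ->
  Omega K1 h + Omega K2 h = Omega K3 h -> K1 < K3.
Proof. intros h1 h2 h3 hh E.
destruct (Rlt_or_le K1 K3) as [l|l]; auto. exfalso.
assert (Omega K3 h <= Omega K1 h).
{ unfold Omega. apply sqrt_le_1_alt.
  pose proof (tanh_le (K3*h) (K1*h) ltac:(nra)). pose proof (tanh_nonneg (K3*h) ltac:(nra)). nra. }
pose proof (Omega_pos K2 h h2 hh). lra. Qed.

Lemma lower_j Kj K3 h : 0 < Kj -> Kj < K3 -> 0 < h -> Kj / K3 * Omega K3 h < Omega Kj h.
Proof. intros hj hj3 hh.
apply sq_lt. apply Rmult_le_pos. apply Rlt_le, Rdiv_lt_0_compat; lra. apply Omega_nonneg. apply Omega_nonneg.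
rewrite Rpow_mult_distr, !Omega_sq; try lra.
pose proof (M2 (Kj*h) (K3*h) ltac:(nra) ltac:(nra)).
assert (Kj * tanh (K3*h) < K3 * tanh (Kj*h)).
{ apply Rmult_lt_reg_r with h; auto. nra. }
replace ((Kj / K3)^2 * (K3 * tanh (K3 * h))) with (Kj * (Kj * tanh (K3*h)) / K3) by (field; lra).
apply Rmult_lt_reg_r with K3. lra. field_simplify; nra.
Qed.

Lemma upper_j Kj K3 h : 0 < Kj -> Kj < K3 -> 0 < h -> Omega Kj h < sqrt Kj * sqrt (tanh (K3*h)).
Proof. intros hj hj3 hh.
pose proof (tanh_pos (K3*h) ltac:(nra)).
apply sq_lt. apply Omega_nonneg. apply Rmult_le_pos; apply sqrt_pos.
rewrite Rpow_mult_distr, Omega_sq, !pow2_sqrt; try lra.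
pose proof (tanh_incr (Kj*h) (K3*h) ltac:(nra)). nra.
Qed.

Lemma nec K1 K2 K3 h : 0 < K1 -> 0 < K2 -> 0 < K3 -> 0 < h ->
  Omega K1 h + Omega K2 h = Omega K3 h -> K1 + K2 < K3 /\ K3 < (sqrt K1 + sqrt K2) ^ 2.
Proof. intros h1 h2 h3 hh E.
pose proof (Kle_lt K1 K2 K3 h h1 h2 h3 hh E) as l1.
assert (l2 : K2 < K3). { apply (Kle_lt K2 K1 K3 h); auto. lra. }
pose proof (Omega_pos K3 h h3 hh).
split.
- pose proof (lower_j K1 K3 h h1 l1 hh). pose proof (lower_j K2 K3 h h2 l2 hh).
  assert ((K1 + K2) / K3 * Omega K3 h < Omega K3 h).
  { replace ((K1 + K2) / K3 * Omega K3 h) with (K1 / K3 * Omega K3 h + K2 / K3 * Omega K3 h) by (field; lra). lra. }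
  assert ((K1 + K2) / K3 < 1) by nra.
  apply Rmult_lt_reg_r with (/K3). apply Rinv_0_lt_compat; lra.
  rewrite Rinv_r by lra. exact H3.
- pose proof (upper_j K1 K3 h h1 l1 hh). pose proof (upper_j K2 K3 h h2 l2 hh).
  pose proof (tanh_pos (K3*h) ltac:(nra)).
  assert (Omega K3 h = sqrt K3 * sqrt (tanh (K3*h))) by (unfold Omega; apply sqrt_mult; lra).
  pose proof (sqrt_lt_R0 _ H2).
  assert (sqrt K3 < sqrt K1 + sqrt K2) by nra.
  rewrite <- (pow2_sqrt K3) by lra. pose proof (sqrt_pos K3). nra.
Qed.

Lemma uniq_j Kj K3 h h' : 0 < Kj -> Kj < K3 -> 0 < h -> h < h' ->
  Omega Kj h * Omega K3 h' < Omega Kj h' * Omega K3 h.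
Proof. intros hj hj3 hh hhh.
apply sq_lt. apply Rmult_le_pos; apply Omega_nonneg. apply Rmult_le_pos; apply Omega_nonneg.
rewrite !Rpow_mult_distr, !Omega_sq; try lra.
pose proof (M4 Kj K3 h h' hj hj3 hh hhh).
assert (0 < Kj * K3) by nra. nra.
Qed.

Lemma uniq K1 K2 K3 h h' : 0 < K1 -> 0 < K2 -> K1 + K2 < K3 -> 0 < h -> h < h' ->
  Omega K1 h + Omega K2 h = Omega K3 h -> Omega K1 h' + Omega K2 h' = Omega K3 h' -> False.
Proof. intros h1 h2 h3 hh hhh E E'.
pose proof (uniq_j K1 K3 h h' h1 ltac:(lra) hh hhh).
pose proof (uniq_j K2 K3 h h' h2 ltac:(lra) hh hhh).
assert ((Omega K1 h + Omega K2 h) * Omega K3 h' < (Omega K1 h' + Omega K2 h') * Omega K3 h) by nra.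
rewrite E, E' in H1. lra.
Qed.

Lemma sq_le u v : 0 <= u -> 0 <= v -> u^2 <= v^2 -> u <= v.
Proof. intros. nra. Qed.

Lemma small_point K1 K2 K3 : 0 < K1 -> 0 < K2 -> K1 + K2 < K3 ->
  exists e, 0 < e /\ Omega K1 e + Omega K2 e < Omega K3 e.
Proof. intros h1 h2 h3.
set (q := ((K1 + K2) / K3)^2).
assert (hq0 : 0 < q). { unfold q. apply pow_lt. apply Rdiv_lt_0_compat; lra. }
assert (hq1 : q < 1). { unfold q. assert (0 < (K1+K2)/K3 < 1). split. apply Rdiv_lt_0_compat; lra.
  apply Rmult_lt_reg_r with K3. lra. field_simplify; lra. nra. }
set (r := 2 / q - 1).
assert (hr : 1 < r). { unfold r. assert (2 < 2 / q); [|lra].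
  apply Rmult_lt_reg_r with q; auto. field_simplify; lra. }
set (x0 := ln r / 4).
assert (hx0 : 0 < x0). { unfold x0. pose proof (ln_increasing 1 r ltac:(lra) hr). rewrite ln_1 in H. lra. }
assert (hE : exp (2*x0) < r).
{ rewrite <- (exp_ln r) by lra. apply exp_increasing. unfold x0 in *. lra. }
assert (ht : q * x0 < tanh x0).
{ pose proof (tanh_lower x0 hx0). pose proof (exp_pos (2*x0)).
  assert (q * x0 < 2 * x0 / (exp (2 * x0) + 1)); [|lra].
  apply Rmult_lt_reg_r with (exp (2 * x0) + 1). lra.
  field_simplify; [|lra]. unfold r in hE.
  assert (q * exp (2*x0) < 2 - q). { apply Rmult_lt_reg_r with (/q). apply Rinv_0_lt_compat; lra.
    replace (q * exp (2 * x0) * / q) with (exp (2*x0)) by (field; lra).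
    replace ((2 - q) * / q) with (2 / q - 1) by (field; lra). lra. }
  nra. }
exists (x0 / K3). assert (hK3 : 0 < K3) by lra.
assert (he : 0 < x0 / K3) by (apply Rdiv_lt_0_compat; lra). split; auto.
set (e := x0 / K3) in *.
assert (bj : forall Kj, 0 < Kj -> Omega Kj e <= Kj * sqrt e).
{ intros Kj hj. apply sq_le. apply Omega_nonneg. pose proof (sqrt_pos e). nra.
  rewrite Rpow_mult_distr, Omega_sq, pow2_sqrt; try lra.
  pose proof (tanh_lt (Kj*e) ltac:(nra)). nra. }
assert (b3 : (K1 + K2) * sqrt e < Omega K3 e).
{ apply sq_lt. pose proof (sqrt_pos e). nra. apply Omega_nonneg.
  rewrite Rpow_mult_distr, Omega_sq, pow2_sqrt; try lra.
  replace (K3 * e) with x0 by (unfold e; field; lra).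
  assert ((K1 + K2) ^ 2 * e = K3 * (q * x0)) by (unfold q, e; field; lra).
  rewrite H. apply Rmult_lt_compat_l; lra. }
pose proof (bj K1 h1). pose proof (bj K2 h2). lra.
Qed.

Lemma large_point K1 K2 K3 e0 : 0 < K1 -> 0 < K2 -> 0 < K3 -> 0 <= e0 ->
  K3 < (sqrt K1 + sqrt K2) ^ 2 ->
  exists M, e0 < M /\ Omega K3 M < Omega K1 M + Omega K2 M.
Proof. intros h1 h2 h3 he0 hK.
pose proof (sqrt_lt_R0 K1 h1). pose proof (sqrt_lt_R0 K2 h2).
set (S := sqrt K1 + sqrt K2) in *.
assert (hS0 : 0 < S) by (unfold S; lra).
assert (hS : 0 < S ^ 2) by nra.
set (t := K3 / S ^ 2).
assert (ht0 : 0 < t) by (apply Rdiv_lt_0_compat; lra).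
assert (ht1 : t < 1). { unfold t. apply Rmult_lt_reg_r with (S^2); auto. replace (K3 / S^2 * S^2) with K3 by (field; lra). lra. }
set (z := (1 + t) / (1 - t)).
assert (hz : 1 < z). { unfold z. assert ((1+t)/(1-t) - 1 = 2*t/(1-t)) by (field; lra).
  assert (0 < 2*t/(1-t)) by (apply Rdiv_lt_0_compat; lra). lra. }
set (y0 := ln z / 2).
assert (hy0 : 0 < y0). { unfold y0. pose proof (ln_increasing 1 z ltac:(lra) hz). rewrite ln_1 in H1. lra. }
assert (hty : tanh y0 = t).
{ rewrite tanh_exp. unfold y0. replace (2 * (ln z / 2)) with (ln z) by field.
  rewrite exp_ln by lra. unfold z. field. lra. }
set (M := e0 + y0 / K1 + y0 / K2 + 1).
assert (hy1 : 0 < y0 / K1) by (apply Rdiv_lt_0_compat; lra).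
assert (hy2 : 0 < y0 / K2) by (apply Rdiv_lt_0_compat; lra).
exists M. split. unfold M; lra.
assert (hM : 0 < M) by (unfold M; lra).
assert (bj : forall Kj, 0 < Kj -> y0 <= Kj * M -> sqrt t * sqrt Kj <= Omega Kj M).
{ intros Kj hj hy. apply sq_le. apply Rmult_le_pos; apply sqrt_pos. apply Omega_nonneg.
  rewrite Rpow_mult_distr, Omega_sq, !pow2_sqrt; try lra.
  pose proof (tanh_le y0 (Kj*M) hy). nra. }
assert (b1 : y0 <= K1 * M).
{ unfold M. replace (K1 * (e0 + y0 / K1 + y0 / K2 + 1)) with (K1 * e0 + y0 + K1 * (y0/K2) + K1) by (field; lra). nra. }
assert (b2 : y0 <= K2 * M).
{ unfold M. replace (K2 * (e0 + y0 / K1 + y0 / K2 + 1)) with (K2 * e0 + K2 * (y0/K1) + y0 + K2) by (field; lra). nra. }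
pose proof (bj K1 h1 b1). pose proof (bj K2 h2 b2).
assert (Omega K3 M < sqrt t * S).
{ apply sq_lt. apply Omega_nonneg. pose proof (sqrt_pos t). unfold S in *; nra.
  rewrite Rpow_mult_distr, Omega_sq, pow2_sqrt; try lra.
  pose proof (tanh_lt1 (K3*M)).
  replace (t * S^2) with K3 by (unfold t; field; lra). nra. }
unfold S in *. lra.
Qed.

Theorem theorem1 (K1 K2 K3 : R) (hK1 : 0 < K1) (hK2 : 0 < K2) (hK3 : 0 < K3) :
  ((exists h : R, 0 < h /\ Omega K1 h + Omega K2 h = Omega K3 h) <->
     (K1 + K2 < K3 /\ K3 < (sqrt K1 + sqrt K2) ^ 2)) /\
  (K1 + K2 < K3 /\ K3 < (sqrt K1 + sqrt K2) ^ 2 ->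
     forall h h' : R, 0 < h -> 0 < h' ->
       Omega K1 h + Omega K2 h = Omega K3 h ->
       Omega K1 h' + Omega K2 h' = Omega K3 h' -> h = h').
Proof.
split; [split|].
- intros [h [hh E]]. now apply (nec K1 K2 K3 h).
- intros [hl hu].
  destruct (small_point K1 K2 K3 hK1 hK2 hl) as [e [he He]].
  destruct (large_point K1 K2 K3 e hK1 hK2 hK3 ltac:(lra) hu) as [M [hM HM]].
  destruct (IVT_interv (fun h => Omega K1 h + Omega K2 h - Omega K3 h) e M) as [z [hz Ez]].
  + intros a ha.
    apply (continuity_pt_minus (fun h => Omega K1 h + Omega K2 h) (Omega K3)).
    apply (continuity_pt_plus (Omega K1) (Omega K2)).
    apply Omega_cont; lra. apply Omega_cont; lra. apply Omega_cont; lra.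
  + exact hM.
  + simpl. lra.
  + simpl. lra.
  + exists z. split. lra. simpl in Ez. lra.
- intros [hl hu] h h' hh hh' E E'.
  destruct (Rtotal_order h h') as [l|[l|l]]; auto.
  + exfalso. apply (uniq K1 K2 K3 h h'); auto.
  + exfalso. apply (uniq K1 K2 K3 h' h); auto.
Qed.
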